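(* Let $A\in\mathbb{R}^{n\times n}$ with $\rho(|A|)<1$ (in particular $\rho(A)<1$), let $\mathcal{X}=(I-|A|)^{-1}$ with entries $\mathcal{X}_{pq}$, let $i,j\in\{1,\dots,n\}$, and let $w\in\mathbb{R}$ satisfy $-\frac{1}{\mathcal{X}_{ij}}<w<\frac{1}{\mathcal{X}_{ij}}$ (if $\mathcal{X}_{ij}=0$ this condition imposes no restriction on $w$). Then the modified matrix $A+we_je_i^{\top}$ (adding weight $w$ to the edge $i\to j$) satisfies $\rho(A+we_je_i^{\top})<1$.
   Context: $|A|$ is the entrywise absolute value; $\rho$ is the spectral radius; $e_k$ is the $k$-th canonical unit vector. Note $\mathcal{X}\ge0$ entrywise. *)

(* Defs.v *)
From HB Require Import structures.
From mathcomp Require Import all_boot all_order all_algebra.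
From mathcomp Require Import classical_sets boolp reals.
From mathcomp Require Import complex.
Set Implicit Arguments. Unset Strict Implicit. Unset Printing Implicit Defensive.
Import Order.TTheory GRing.Theory Num.Theory.
Local Open Scope ring_scope.
Local Open Scope classical_set_scope.

Definition absmx (R : realType) (m n : nat) (A : 'M[R]_(m, n)) : 'M[R]_(m, n) :=
  map_mx (fun x => `|x|) A.

Definition cplxmx (R : realType) (n : nat) (A : 'M[R]_n) : 'M[R[i]]_n :=
  map_mx (fun x => x%:C%C) A.

(* Spectral radius: the largest modulus of a (complex) eigenvalue of A.
   (The set is finite; for n = 0 it is empty and sup gives 0.) *)
Definition spectral_radius (R : realType) (n : nat) (A : 'M[R]_n) : R :=
  sup [set ComplexField.Normc.normc z | z in [set z : R[i] | eigenvalue (cplxmx A) z]].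

(* Main.v *)
Require Import Defs.
From HB Require Import structures.
From mathcomp Require Import all_boot all_order all_algebra.
From mathcomp Require Import classical_sets boolp reals.
From mathcomp Require Import complex polyrcf ring lra.
Import Order.TTheory GRing.Theory Num.Theory.
Set Implicit Arguments. Unset Strict Implicit.
Local Open Scope ring_scope.
Local Open Scope classical_set_scope.

Section Aux.
Variable R : realType.

Lemma poly_pos_right (p : {poly R}) l : 0 < lead_coef p ->
  (forall y, l <= y -> ~~ root p y) -> forall y, l <= y -> 0 < p.[y].
Proof.
move=> lp nr y ly; have [N HN] := poly_pinfty_gt_lc lp.
have pY : 0 < p.[Num.max y N] by apply: lt_le_trans lp (HN _ _); rewrite le_max lexx orbT.
rewrite ltNge; apply/negP => py.
have yY : y <= Num.max y N by rewrite le_max lexx.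
have [x xin rx] := poly_ivt yY (introT andP (conj py (ltW pY))).
have yx : y <= x by case/andP: xin.
by move: (nr x (le_trans ly yx)); rewrite rx.
Qed.

Lemma poly_left_cont (q : {poly R}) x :
  (forall y, x < y -> q.[y] <= 0) -> q.[x] <= 0.
Proof.
move=> H; rewrite leNgt; apply/negP => qx.
have [d d0 Hd] := poly_cont x q qx.
have hy : x < x + d / 2 by rewrite ltrDl divr_gt0.
have e : x + d / 2 - x = d / 2 by rewrite addrC addKr.
have hd : `|x + d / 2 - x| < d.
  by rewrite e gtr0_norm ?divr_gt0 // ltr_pdivrMr // ltr_pMr // ltr1n.
have := Hd _ hd; rewrite ltr_norml => /andP[h _].
have : 0 < q.[x + d / 2] by lra.
by rewrite ltNge H.
Qed.

Lemma max_in_seq (s : seq R) (P : pred R) : has P s ->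
  exists2 m, (m \in s) && P m & forall y, y \in s -> P y -> y <= m.
Proof.
elim: s => [//|a s IH] /=; case Pa: (P a) => /=.
  case hs: (has P s).
    have [m /andP[ms Pm] Hm] := IH hs.
    exists (Num.max a m); first by case: (leP a m) => _; rewrite ?in_cons ?ms ?orbT ?eqxx ?Pa ?Pm.
    move=> y; rewrite in_cons => /orP[/eqP ->|ys] Py; rewrite le_max ?lexx //.
    by rewrite Hm ?orbT.
  exists a; first by rewrite in_cons eqxx Pa.
  move=> y; rewrite in_cons => /orP[/eqP ->//|ys] Py.
  by move/hasPn: hs => /(_ y ys); rewrite Py.
move=> hs; have [m /andP[ms Pm] Hm] := IH hs.
exists m; first by rewrite in_cons ms orbT Pm.
move=> y; rewrite in_cons => /orP[/eqP ->|ys] Py; last exact: Hm.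
by rewrite Pa in Py.
Qed.

End Aux.
Section Mx.
Variable R : realType.

Definition nneg m n (A : 'M[R]_(m, n)) := forall p q, 0 <= A p q.

Lemma nnegM m n k (A : 'M[R]_(m, n)) (B : 'M[R]_(n, k)) :
  nneg A -> nneg B -> nneg (A *m B).
Proof.
move=> hA hB p q; rewrite mxE; apply: sumr_ge0 => l _; exact: mulr_ge0.
Qed.

Lemma nnegD m n (A B : 'M[R]_(m, n)) : nneg A -> nneg B -> nneg (A + B).
Proof. by move=> hA hB p q; rewrite mxE addr_ge0. Qed.

Lemma nnegZ m n c (A : 'M[R]_(m, n)) : 0 <= c -> nneg A -> nneg (c *: A).
Proof. by move=> hc hA p q; rewrite mxE mulr_ge0. Qed.

Lemma nneg_scalar n c : 0 <= c -> nneg (c%:M : 'M[R]_n).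
Proof. by move=> hc p q; rewrite mxE mulrn_wge0. Qed.

Lemma nneg_block m1 m2 n1 n2 (A1 : 'M[R]_(m1, n1)) (A2 : 'M[R]_(m1, n2))
  (A3 : 'M[R]_(m2, n1)) (A4 : 'M[R]_(m2, n2)) :
  nneg A1 -> nneg A2 -> nneg A3 -> nneg A4 -> nneg (block_mx A1 A2 A3 A4).
Proof.
move=> h1 h2 h3 h4 p q.
rewrite -[p]splitK -[q]splitK; case: (split p) => p'; case: (split q) => q' /=.
- by rewrite block_mxEul.
- by rewrite block_mxEur.
- by rewrite block_mxEdl.
- by rewrite block_mxEdr.
Qed.

Lemma char_poly_horner n (A : 'M[R]_n) a :
  (char_poly A).[a] = \det (a%:M - A).
Proof.
rewrite /char_poly.
have -> : (\det (char_poly_mx A)).[a] = horner_eval a (\det (char_poly_mx A)) by [].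
rewrite -det_map_mx; congr (\det _).
apply/matrixP => p q; rewrite !mxE /= horner_evalE.
by rewrite hornerD hornerN hornerMn hornerX hornerC.
Qed.

Lemma schur_det n1 n2 (a : 'M[R]_n1) (r : 'M[R]_(n1, n2)) (c : 'M[R]_(n2, n1))
  (D : 'M[R]_n2) : D \in unitmx ->
  \det (block_mx a r c D) = \det D * \det (a - r *m invmx D *m c).
Proof.
move=> uD.
have -> : block_mx a r c D =
  block_mx 1%:M (r *m invmx D) 0 1%:M *m block_mx (a - r *m invmx D *m c) 0 c D.
  rewrite mulmx_block !mul1mx !mul0mx.
  by rewrite !add0r -!mulmxA mulVmx // mulmx1 subrK.
by rewrite det_mulmx det_ublock det_lblock !det1 !mul1r mulrC.
Qed.


Lemma detpos n (B : 'M[R]_n) l :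
  (forall y, l <= y -> \det (y%:M - B) != 0) ->
  forall y, l <= y -> 0 < \det (y%:M - B).
Proof.
move=> hd y ly; rewrite -char_poly_horner.
apply: (@poly_pos_right _ _ l) => //.
  by move: (char_poly_monic B) => /monicP ->.
by move=> z lz; rewrite /root char_poly_horner hd.
Qed.

Lemma core n : forall (B : 'M[R]_n) (l : R), nneg B ->
  (forall y, l <= y -> \det (y%:M - B) != 0) ->
  (l%:M - B \in unitmx) /\ nneg (invmx (l%:M - B)).
Proof.
elim: n => [|n IH] B l hB hdet.
  split; first by rewrite unitmxE unitfE hdet // lexx.
  by move=> [].
have hpos := detpos hdet.
have uN : l%:M - B \in unitmx by rewrite unitmxE unitfE hdet // lexx.
split => //.
pose B1 : 'M[R]_(1 + n) := B.
pose b := ulsubmx B1; pose r := ursubmx B1; pose c := dlsubmx B1; pose B' := drsubmx B1.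
have hb : nneg b by move=> p q; rewrite !mxE; apply: hB.
have hr : nneg r by move=> p q; rewrite !mxE; apply: hB.
have hc : nneg c by move=> p q; rewrite !mxE; apply: hB.
have hB' : nneg B' by move=> p q; rewrite !mxE; apply: hB.
have blk : forall y, y%:M - B1 = block_mx (y%:M - b) (- r) (- c) (y%:M - B').
  move=> y; rewrite -{1}(submxK B1) (scalar_mx_block 1 n y) opp_block_mx.
  by rewrite add_block_mx !sub0r.
have schur_y : forall y, y%:M - B' \in unitmx -> \det (y%:M - B) =
    \det (y%:M - B') * ((y - b 0 0) - (r *m invmx (y%:M - B') *m c) 0 0).
  move=> y uy; change (\det (y%:M - B1) = \det (y%:M - B') *
     ((y - b 0 0) - (r *m invmx (y%:M - B') *m c) 0 0)).
  rewrite blk schur_det // det_mx11 mulNmx mulmxN mulNmx opprK !mxE eqxx mulr1n.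
  by [].
have NR : forall y, l <= y -> \det (y%:M - B') != 0.
  move=> y0 ly0; apply/negP => /eqP d0.
  pose d := char_poly B'.
  have dn0 : d != 0 by apply: monic_neq0; apply: char_poly_monic.
  have rt : root d y0 by rewrite /root char_poly_horner d0.
  have hs := roots_on_rootsR dn0.
  have inS : forall x, root d x -> x \in rootsR d by move=> x rx; rewrite -hs rx andbT.
  have [m /andP[ms lm] Hm] := @max_in_seq _ (rootsR d) (fun x => l <= x)
     (introT hasP (ex_intro2 _ _ y0 (inS _ rt) ly0)).
  have rm : root d m by have := hs m; rewrite ms => /andP[_ ->].
  have Hgt : forall y, m < y -> (forall z, y <= z -> \det (z%:M - B') != 0).
    move=> y my z yz; apply/negP => /eqP dz.
    have rz : root d z by rewrite /root char_poly_horner dz.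
    have := Hm z (inS _ rz) (le_trans lm (ltW (lt_le_trans my yz))).
    by rewrite leNgt (lt_le_trans my yz).
  pose q := char_poly B - ('X - (b 0 0)%:P) * d.
  have qle : forall y, m < y -> q.[y] <= 0.
    move=> y my; have [uy hZy] := IH B' y hB' (Hgt y my).
    have dy : 0 < \det (y%:M - B') := detpos (Hgt y my) (lexx y).
    rewrite /q hornerD hornerN hornerM hornerD hornerN hornerX hornerC.
    rewrite !char_poly_horner (schur_y y uy).
    have t0 : 0 <= (r *m invmx (y%:M - B') *m c) 0 0.
      exact: (nnegM (nnegM hr hZy) hc).
    nra.
  have := poly_left_cont qle.
  rewrite /q hornerD hornerN hornerM (rootP rm) mulr0 subr0 char_poly_horner.
  by rewrite leNgt hpos.
have [uD hZ] := IH B' l hB' NR.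
set Z := invmx (l%:M - B') in hZ *.
pose a0 := l - b 0 0; pose t := (r *m Z *m c) 0 0; pose s := a0 - t.
have spos : 0 < s.
  have := hpos l (lexx l); rewrite (schur_y l uD) pmulr_rgt0; first by [].
  by apply: (detpos NR); rewrite lexx.
have sn0 : s != 0 by rewrite gt_eqF.
have DZ : (l%:M - B') *m Z = 1%:M := mulmxV uD.
have ha : l%:M - b = a0%:M.
  by rewrite [LHS]mx11_scalar !mxE eqxx mulr1n /a0 /b !mxE.
have ht : r *m Z *m c = t%:M by exact: mx11_scalar.
pose K : 'M[R]_(1 + n) := block_mx (s^-1)%:M (s^-1 *: (r *m Z)) (s^-1 *: (Z *m c))
   (Z + s^-1 *: (Z *m c *m (r *m Z))).
have NK : (l%:M - B) *m K = 1%:M.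
  change ((l%:M - B1) *m K = 1%:M).
  rewrite blk mulmx_block (scalar_mx_block 1 n 1); congr block_mx.
  - rewrite ha mul_scalar_mx scale_scalar_mx mulNmx -scalemxAr mulmxA ht.
    rewrite scale_scalar_mx.
    apply/matrixP => i j; rewrite !ord1 !mxE eqxx !mulr1n /s.
    by field.
  - rewrite ha mul_scalar_mx mulNmx mulmxDr -!scalemxAr !mulmxA ht.
    rewrite mul_scalar_mx -scalemxAl !scalerA.
    rewrite -[X in -(X + _)]scale1r -scalerDl -scaleNr -scalerDl.
    have -> : a0 * s^-1 + - (1 + s^-1 * t) = 0 by rewrite /s; field.
    by rewrite scale0r.
  - by rewrite mulNmx mul_mx_scalar -scalemxAr mulmxA DZ mul1mx addNr.
  - rewrite mulNmx mulmxDr DZ -!scalemxAr !mulmxA DZ mul1mx.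
    by rewrite addrCA addNr addr0.
have -> : invmx (l%:M - B) = K by rewrite -[RHS](mulKmx uN K) NK mulmx1.
have si : 0 <= s^-1 by rewrite invr_ge0 ltW.
have hK : nneg K; last exact: hK.
apply: nneg_block.
- exact: nneg_scalar.
- exact: nnegZ si (nnegM hr hZ).
- exact: nnegZ si (nnegM hZ hc).
- exact: nnegD hZ (nnegZ si (nnegM (nnegM hZ hc) (nnegM hr hZ))).
Qed.

Local Notation nc := (@ComplexField.Normc.normc R).

Lemma normc_C (x : R[i]) : `|x| = (nc x)%:C%C.
Proof. by case: x => a b; rewrite normc_def. Qed.

Lemma nc_ge0 (x : R[i]) : 0 <= nc x.
Proof. by rewrite -lecR -normc_C normr_ge0. Qed.

Lemma nc_real (x : R) : nc x%:C%C = `|x|.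
Proof. by rewrite /= expr0n /= addr0 sqrtr_sqr. Qed.

Lemma normC_real (x : R) : `|x%:C%C| = (`|x|)%:C%C.
Proof. by rewrite normc_C nc_real. Qed.

Lemma foldmax_ub (s : seq R) x : x \in s -> x <= foldr Num.max 0 s.
Proof.
elim: s => [//|a s IH]; rewrite in_cons => /orP[/eqP ->|xs] /=; rewrite le_max ?lexx //.
by rewrite IH ?orbT.
Qed.

Lemma foldmax_lt (s : seq R) c : 0 < c -> all (fun x => x < c) s ->
  foldr Num.max 0 s < c.
Proof.
move=> c0; elim: s => [//|a s IH] /= /andP[ac hs].
by rewrite gt_max ac IH.
Qed.

Lemma eig_fin n (M : 'M[R]_n) :
  exists rs : seq R[i], forall z, eigenvalue (cplxmx M) z -> z \in rs.
Proof.
have [rs hrs] := closed_field_poly_normal (char_poly (cplxmx M)).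
exists rs => z; rewrite eigenvalue_root_char hrs.
move: (char_poly_monic (cplxmx M)) => /monicP ->.
by rewrite scale1r root_prod_XsubC.
Qed.

Definition eigS n (M : 'M[R]_n) :=
  [set nc z | z in [set z : R[i] | eigenvalue (cplxmx M) z]].

Lemma sr_ub n (M : 'M[R]_n) z : eigenvalue (cplxmx M) z ->
  nc z <= spectral_radius M.
Proof.
move=> hz; have [rs hrs] := eig_fin M.
have hub : has_ubound (eigS M).
  exists (foldr Num.max 0 (map nc rs)) => y [x hx <-].
  by apply: foldmax_ub; apply: map_f; apply: hrs.
by apply: (ub_le_sup hub); exists z.
Qed.

Lemma sr_lt1 n (M : 'M[R]_n) :
  (forall z, eigenvalue (cplxmx M) z -> nc z < 1) -> spectral_radius M < 1.
Proof.
move=> h; have [rs hrs] := eig_fin M.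
rewrite /spectral_radius -/(eigS M).
case: (pselect (eigS M !=set0)) => [ne|e].
  apply: (le_lt_trans (ge_sup (x := foldr Num.max 0
     (map nc (filter (fun z => eigenvalue (cplxmx M) z) rs))) ne _)).
    move=> y [x hx <-]; apply: foldmax_ub; apply: map_f.
    by rewrite mem_filter hx hrs.
  apply: foldmax_lt => //; apply/allP => y /mapP [x]; rewrite mem_filter.
  by move=> /andP[hx _] ->; apply: h.
have -> : eigS M = set0.
  apply/funext => y; apply/propext; split => [Sy|[]]; apply: e; exists y => //.
by rewrite sup0.
Qed.

Lemma eig_real n (B : 'M[R]_n) (y : R) : \det (y%:M - B) = 0 ->
  eigenvalue (cplxmx B) y%:C%C.
Proof.
move=> /eqP /det0P [v vn0 hv]; apply/eigenvalueP.
exists (map_mx (real_complex R) v).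
  have e : v *m B = y *: v.
    by move/eqP: hv; rewrite mulmxBr mul_mx_scalar subr_eq0 eq_sym => /eqP.
  apply/matrixP => p q; have := congr1 (fun m : 'M[R]_(1, n) => m p q) e; rewrite !mxE => h.
  rewrite -rmorphM -h rmorph_sum; apply: eq_bigr => k _; rewrite !mxE rmorphM //.
apply: contra vn0 => /eqP h; apply/eqP/matrixP => p q.
have := congr1 (fun m : 'M[R[i]]_(1, n) => m p q) h; rewrite !mxE => /eqP.
by rewrite -(rmorph0 (real_complex R)) => /eqP /complexI.
Qed.

Lemma eig_lt1 n (M C Y : 'M[R]_n) : (forall p q, 0 <= Y p q) ->
  (1%:M - C) *m Y = 1%:M -> (forall p q, `|M p q| <= C p q) ->
  forall z, eigenvalue (cplxmx M) z -> nc z < 1.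
Proof.
move=> hY hCY hMC z /eigenvalueP [v hv vn0].
rewrite ltNge; apply/negP => z1.
pose u : 'rV[R]_n := \row_q nc (v 0 q).
have u0 : forall q, 0 <= u 0 q by move=> q; rewrite mxE nc_ge0.
have key : forall q, nc z * u 0 q <= (u *m C) 0 q.
  move=> q; have e := congr1 (fun m : 'M[R[i]]_(1, n) => m 0 q) hv; rewrite !mxE in e.
  rewrite -lecR rmorphM /= [u 0 q]mxE -!normc_C -normrM -e.
  apply: (le_trans (ler_norm_sum _ _ _)); rewrite mxE rmorph_sum.
  apply: ler_sum => k _; rewrite !mxE normrM normC_real normc_C -rmorphM lecR.
  by rewrite ler_wpM2l ?nc_ge0.
have neg : forall q, (u *m (1%:M - C)) 0 q <= 0.
  move=> q; rewrite mulmxBr mulmx1.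
  have -> : (u - u *m C) 0 q = u 0 q - (u *m C) 0 q by rewrite !mxE.
  rewrite subr_le0.
  exact: le_trans (ler_peMl (u0 q) z1) (key q).
have uz : forall q, u 0 q = 0.
  move=> q; apply/eqP; rewrite eq_le u0 andbT.
  have -> : u = u *m (1%:M - C) *m Y by rewrite -mulmxA hCY mulmx1.
  rewrite mxE; apply: sumr_le0 => k _; exact: mulr_le0_ge0 (neg k) (hY k q).
move/negP: vn0; apply; apply/eqP/matrixP => p q; rewrite ord1 mxE.
have := uz q; rewrite mxE => h; apply/eqP; rewrite -normr_eq0 normc_C h.
by [].
Qed.


Lemma dXd n (M : 'M[R]_n) i j :
  delta_mx j i *m M *m delta_mx j i = M i j *: delta_mx j i.
Proof.
apply/matrixP => p q; rewrite mxE (bigD1 j) //= big1 ?addr0; last first.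
  by move=> k kj; rewrite [delta_mx j i k q]mxE (negbTE kj) /= mulr0.
rewrite !mxE (bigD1 i) //= big1 ?addr0; last first.
  by move=> k ki; rewrite !mxE (negbTE ki) andbF mul0r.
rewrite !mxE !eqxx /=.
by case: (p == j); case: (q == i); rewrite /= ?mulr1 ?mul1r ?mulr0 ?mul0r.
Qed.

End Mx.

Unset Implicit Arguments.
Local Close Scope classical_set_scope.

Theorem theorem5p4 (R : realType) (n : nat) (A : 'M[R]_n) (i j : 'I_n) (w : R) :
  spectral_radius (absmx A) < 1 ->
  let X := invmx (1%:M - absmx A) in
  (X i j != 0 -> - (X i j)^-1 < w < (X i j)^-1) ->
  spectral_radius (A + w *: delta_mx j i) < 1.
Proof.
move=> hsr X hX.
set B := absmx A.
have hB : nneg B by move=> p q; rewrite mxE normr_ge0.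
have NR : forall y, 1 <= y -> \det (y%:M - B) != 0.
  move=> y y1; apply/eqP => d0.
  have := sr_ub (eig_real d0); rewrite nc_real ger0_norm ?(le_trans ler01 y1) // => hy.
  by move: (le_lt_trans hy hsr); rewrite ltNge y1.
have [uN hX0] := core hB NR.
have Xij0 : 0 <= X i j := hX0 i j.
pose E : 'M[R]_n := delta_mx j i.
have hE : nneg E by move=> p q; rewrite mxE ler0n.
have hcw : 0 < 1 - `|w| * X i j.
  case: (eqVneq (X i j) 0) => [->|xn0]; first by rewrite mulr0 subr0 ltr01.
  have xpos : 0 < X i j by rewrite lt_def xn0 Xij0.
  have /andP[w1 w2] := hX xn0.
  have : `|w| < (X i j)^-1 by rewrite ltr_norml w1 w2.
  by rewrite subr_gt0 -ltr_pdivlMr // mul1r.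
pose c0 := `|w| / (1 - `|w| * X i j).
have c0ge0 : 0 <= c0 by rewrite divr_ge0 // ltW.
pose C := B + `|w| *: E.
pose Y := X + c0 *: (X *m E *m X).
have hY : nneg Y := nnegD hX0 (nnegZ c0ge0 (nnegM (nnegM hX0 hE) hX0)).
have NX : (1%:M - B) *m X = 1%:M := mulmxV uN.
have hCY : (1%:M - C) *m Y = 1%:M.
  rewrite /C /Y opprD addrA mulmxBl !mulmxDr NX.
  rewrite -[(1%:M - B) *m _]scalemxAr !mulmxA NX mul1mx.
  rewrite -[(`|w| *: E) *m X]scalemxAl -[(`|w| *: E) *m _]scalemxAl.
  rewrite -[E *m (c0 *: _)]scalemxAr !mulmxA [E *m X *m E]dXd.
  rewrite -[(X i j *: _) *m X]scalemxAl !scalerA.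
  set Z := E *m X.
  rewrite -addrA -scalerDl -scalerBl.
  have -> : c0 - (`|w| + `|w| * c0 * X i j) = 0.
    by rewrite /c0; field; rewrite gt_eqF.
  by rewrite scale0r addr0.
have hMC : forall p q, `|(A + w *: delta_mx j i) p q| <= C p q.
  move=> p q; rewrite !mxE.
  apply: (le_trans (ler_normD _ _)); rewrite normrM (ger0_norm (ler0n _ _)).
  by [].
apply: sr_lt1; exact: eig_lt1 hY hCY hMC.
Qed.
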